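(* Let $\lambda\in\mathbb Z^n\setminus\{0\}$ have coprime coefficients and let $N\subseteq\mathcal N(\lambda)$ be a set of rank $n-1$. Then: (a) a polynomial $p\in\mathbb Z[X_1,\dots,X_n]$ satisfies $p(\gamma)=0$ for all $\gamma\in N$ if and only if $\mathbf X^{\lambda^+}-\mathbf X^{\lambda^-}$ divides $p$; (b) $\mathbf X^{\lambda^+}-\mathbf X^{\lambda^-}$ is irreducible in $\mathbb Z[X_1,\dots,X_n]$.
   Context: For $\alpha\in\mathbb N_0^n$, $\mathbf X^\alpha=\prod_iX_i^{(\alpha)_i}$. For $\gamma\in\mathbb Z^n$ and $p\in\mathbb Z[X_1,\dots,X_n]$, $p(\gamma)\in\mathbb Q(x)$ denotes the image of $p$ under the ring homomorphism $X_i\mapsto x^{(\gamma)_i}$. For $\lambda\in\mathbb Z^n$, $\lambda^+,\lambda^-$ are the unique vectors in $\mathbb N_0^n$ with $\lambda=\lambda^+-\lambda^-$ and $\lambda^+\cdot\lambda^-=0$. $\lambda$ has coprime coefficients if the gcd of its coordinates is $1$. $\mathcal N(\lambda)=\{\alpha\in\mathbb Z^n:\lambda\cdot\alpha=0\}$. For $M\subseteq\mathbb Q^n$, $M\mathbb Q$ denotes the $\mathbb Q$-subspace spanned by $M$; $M$ has rank $r$ if $\dim M\mathbb Q=r$ and $M$ is not covered by any finite union of subspaces of $M\mathbb Q$ of dimension $r-1$. *)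

(* Defs.v *)
From HB Require Import structures.
From mathcomp Require Import all_boot all_order all_algebra.
Set Implicit Arguments. Unset Strict Implicit. Unset Printing Implicit Defensive.
Import Order.TTheory GRing.Theory Num.Theory.
Local Open Scope ring_scope.

(* Z[X_1,...,X_n] : mpoly 0 = int, mpoly (m+1) = (mpoly m)[X_{m+1}] *)
Fixpoint mpoly (n : nat) : idomainType :=
  if n is m.+1 then ({poly mpoly m} : idomainType) else int.

(* the variable X_(i+1) (0-based index i) in mpoly n; 0 if i >= n *)
Fixpoint mX (n i : nat) : mpoly n :=
  match n return mpoly n with
  | 0 => 0
  | m.+1 => if i == m then ('X : {poly mpoly m}) else ((mX m i)%:P : {poly mpoly m})
  end.

Definition mmono (n : nat) (alpha : 'rV[nat]_n) : mpoly n :=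
  \prod_(i < n) mX n i ^+ alpha 0 i.

Definition Qx : fieldType := {fraction {poly rat}}.
Definition xQ : Qx := tofrac ('X : {poly rat}).

(* evaluation X_(i+1) |-> x ^ g i (integer exponent), extended as ring hom *)
Fixpoint meval (n : nat) (g : nat -> int) : mpoly n -> Qx :=
  match n return mpoly n -> Qx with
  | 0 => fun z => (z : int)%:~R
  | m.+1 => fun p => (map_poly (@meval m g) (p : {poly mpoly m})).[xQ ^ g m]
  end.

Definition rvfun (n : nat) (v : 'rV[int]_n) (i : nat) : int :=
  match @insub nat (fun k => k < n)%N 'I_n i with Some j => v 0 j | None => 0 end.

Definition peval (n : nat) (gamma : 'rV[int]_n) (p : mpoly n) : Qx :=
  @meval n (rvfun gamma) p.

Definition lam_pos (n : nat) (lam : 'rV[int]_n) : 'rV[nat]_n :=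
  \row_j (if 0 <= lam 0 j then absz (lam 0 j) else 0%N).
Definition lam_neg (n : nat) (lam : 'rV[int]_n) : 'rV[nat]_n :=
  \row_j (if lam 0 j < 0 then absz (lam 0 j) else 0%N).

Definition binom (n : nat) (lam : 'rV[int]_n) : mpoly n :=
  mmono (lam_pos lam) - mmono (lam_neg lam).

Definition coprime_coefs (n : nat) (lam : 'rV[int]_n) : Prop :=
  \big[gcdn/0%N]_(i < n) absz (lam 0 i) = 1%N.

Definition dotz (n : nat) (a b : 'rV[int]_n) : int := \sum_(i < n) a 0 i * b 0 i.

Definition Nlam (n : nat) (lam : 'rV[int]_n) (a : 'rV[int]_n) : Prop := dotz lam a = 0.

Definition toQ (n : nat) (v : 'rV[int]_n) : 'rV[rat]_n := map_mx (fun z : int => z%:~R) v.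

Definition imQ (n : nat) (N : 'rV[int]_n -> Prop) (v : 'rV[rat]_n) : Prop :=
  exists g, N g /\ v = toQ g.

(* M has rank r: dim (M Q) = r (witnessed by a spanning family S of elements of M)
   and M is not covered by finitely many subspaces of M Q of dimension r - 1 *)
Definition has_rank (n : nat) (M : 'rV[rat]_n -> Prop) (r : nat) : Prop :=
  exists (k : nat) (S : 'M[rat]_(k, n)),
    (forall i, M (row i S)) /\ \rank S = r /\ (forall v, M v -> (v <= S)%MS) /\
    (forall Us : seq 'M[rat]_n,
       (forall U, U \in Us -> (U <= S)%MS /\ (\rank U)%:Z = r%:Z - 1) ->
       exists v, M v /\ forall U, U \in Us -> ~~ (v <= U)%MS).

Definition rdvd (R : idomainType) (a b : R) : Prop := exists c, b = c * a.
Definition rirreducible (R : idomainType) (p : R) : Prop :=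
  p != 0 /\ p \isn't a GRing.unit /\
  forall a b : R, p = a * b -> a \is a GRing.unit \/ b \is a GRing.unit.

(* Main.v *)
Require Import Defs.
From HB Require Import structures.
From mathcomp Require Import all_boot all_order all_algebra.
From mathcomp Require Import zify ring lra.
Set Implicit Arguments. Unset Strict Implicit. Unset Printing Implicit Defensive.
Import Order.TTheory GRing.Theory Num.Theory.
Local Open Scope ring_scope.

Lemma meval_morph n g : {f : {rmorphism mpoly n -> Qx} | f =1 @meval n g}.
Proof.
elim: n => [|m [f Hf]].
  by exists (GRing.RMorphism.clone _ _ (intmul (1:Qx)) _) => z.
have cfu : commr_rmorph f (xQ ^ g m) by move=> a; exact: mulrC.
exists (horner_morph cfu : {poly mpoly m} -> Qx) => p /=.
by rewrite /horner_morph; congr (_.[_]); apply: eq_map_poly.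
Qed.

Definition upd (e : nat -> nat) (m i : nat) : nat -> nat :=
  fun j => if j == m then i else e j.

Fixpoint mono (n : nat) (e : nat -> nat) : mpoly n :=
  match n return mpoly n with
  | 0 => 1
  | m.+1 => ((mono m e)%:P * 'X^(e m) : {poly mpoly m})
  end.

Lemma mono_ext n e e' : (forall i, (i < n)%N -> e i = e' i) -> mono n e = mono n e'.
Proof.
elim: n => [//|m IH] H /=.
rewrite (IH _) ?H //; move=> i Hi; apply: H; exact: ltnW.
Qed.

Lemma monoD n e e' : mono n (fun i => e i + e' i)%N = mono n e * mono n e'.
Proof.
elim: n => [|m IH] /=; first by rewrite mulr1.
rewrite IH polyCM exprD.
exact: (mulrACA (mono m e)%:P (mono m e')%:P 'X^(e m) 'X^(e' m)).
Qed.

Lemma mono0 n : mono n (fun _ => 0%N) = 1.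
Proof. by elim: n => [//|m IH] /=; rewrite IH mulr1. Qed.

Lemma prodX n (a : nat -> nat) : \prod_(i < n) mX n i ^+ a i = mono n a.
Proof.
elim: n a => [|m IH] a; first by rewrite big_ord0.
rewrite big_ord_recr /= eqxx.
have -> : \prod_(i < m) (mX m.+1 (widen_ord (leqnSn m) i) ^+ a (widen_ord (leqnSn m) i) : mpoly m.+1)
   = ((\prod_(i < m) mX m i ^+ a i) %:P : {poly mpoly m}).
  rewrite rmorph_prod; apply: eq_bigr => i _ /=.
  by rewrite (ltn_eqF (ltn_ord i)) rmorphXn.
by rewrite IH.
Qed.

Definition rvnat n (a : 'rV[nat]_n) (i : nat) : nat :=
  match @insub nat (fun k => k < n)%N 'I_n i with Some j => a 0 j | None => 0%N end.

Lemma rvnatE n (a : 'rV[nat]_n) (i : 'I_n) : rvnat a i = a 0 i.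
Proof. by rewrite /rvnat valK. Qed.

Lemma rvfunE n (a : 'rV[int]_n) (i : 'I_n) : rvfun a i = a 0 i.
Proof. by rewrite /rvfun valK. Qed.

Lemma mmonoE n (a : 'rV[nat]_n) : mmono a = mono n (rvnat a).
Proof.
rewrite /mmono -prodX; apply: eq_bigr => i _; by rewrite rvnatE.
Qed.

Fixpoint expand (n : nat) : mpoly n -> seq (int * (nat -> nat)) :=
  match n return mpoly n -> seq (int * (nat -> nat)) with
  | 0 => fun p => [:: ((p : int), fun _ => 0%N)]
  | m.+1 => fun p => flatten [seq [seq (y.1, upd y.2 m i) | y <- expand ((p : {poly mpoly m})`_i)]
                             | i <- iota 0 (size (p : {poly mpoly m}))]
  end.

Arguments expand : clear implicits.

Lemma expandE n (p : mpoly n) : p = \sum_(y <- expand n p) y.1%:~R * mono n y.2.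
Proof.
elim: n p => [|m IH] p /=.
  by rewrite big_seq1 mulr1 intz.
rewrite big_flatten /= big_map.
transitivity (\poly_(i < size (p : {poly mpoly m})) (p : {poly mpoly m})`_i : {poly mpoly m});
  first by rewrite coefK.
rewrite poly_def.
have -> : iota 0 (size (p : {poly mpoly m})) = index_iota 0 (size (p : {poly mpoly m})) by rewrite /index_iota subn0.
rewrite big_mkord.
apply: eq_bigr => i _.
rewrite {1}(IH (p : {poly mpoly m})`_i) big_map.
rewrite -mul_polyC rmorph_sum big_distrl /=; apply: eq_bigr => y _.
rewrite /upd eqxx rmorphM rmorph_int mulrA; congr (_ * _ * _).
congr (_ %:P); apply: mono_ext => j Hj; by rewrite (ltn_eqF Hj).
Qed.

Definition dotf n (e : nat -> nat) (g : nat -> int) : int := \sum_(i < n) (e i)%:Z * g i.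

Lemma xQ_neq0 : xQ != 0.
Proof. by rewrite /xQ tofrac_eq0 polyX_eq0. Qed.

Lemma meval_mono n g e : @meval n g (mono n e) = xQ ^ dotf n e g.
Proof.
elim: n => [|m IH]; first by rewrite /dotf big_ord0 /= expr0z.
case: (meval_morph m g) => f Hf /=.
rewrite (eq_map_poly (fun x => esym (Hf x))) rmorphM /= map_polyC map_polyXn.
rewrite hornerCM hornerXn.
rewrite [X in X * _ = _](_ : _ = meval g (mono m e)); last exact: Hf.
rewrite IH /dotf big_ord_recr /=.
rewrite expfzDr ?xQ_neq0 //; congr (_ * _).
by rewrite mulrC -exprz_exp.
Qed.

Lemma meval_expand n g (p : mpoly n) :
  meval g p = \sum_(y <- expand n p) y.1%:~R * xQ ^ dotf n y.2 g.
Proof.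
case: (meval_morph n g) => f Hf.
rewrite -Hf {1}(expandE p) rmorph_sum; apply: eq_bigr => y _.
rewrite rmorphM rmorph_int; congr (_ * _).
rewrite -meval_mono; exact: Hf.
Qed.

Lemma mevalM n g (p q : mpoly n) : meval g (p * q) = meval g p * meval g q.
Proof. case: (meval_morph n g) => f Hf; rewrite -!Hf; exact: rmorphM. Qed.

Lemma mevalB n g (p q : mpoly n) : meval g (p - q) = meval g p - meval g q.
Proof. case: (meval_morph n g) => f Hf; rewrite -!Hf; exact: rmorphB. Qed.

Lemma meval1 n g : @meval n g 1 = 1.
Proof. case: (meval_morph n g) => f Hf; rewrite -!Hf; exact: rmorph1. Qed.

Section Rdvd.
Variable R : idomainType.
Implicit Types a b c : R.
Lemma rdvd0 a : rdvd a 0. Proof. by exists 0; rewrite mul0r. Qed.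
Lemma rdvdD a b c : rdvd a b -> rdvd a c -> rdvd a (b + c).
Proof. by move=> [x ->] [y ->]; exists (x + y); rewrite mulrDl. Qed.
Lemma rdvdN a b : rdvd a b -> rdvd a (- b).
Proof. by move=> [x ->]; exists (- x); rewrite mulNr. Qed.
Lemma rdvdM a b c : rdvd a b -> rdvd a (c * b).
Proof. by move=> [x ->]; exists (c * x); rewrite mulrA. Qed.
End Rdvd.

Lemma tofracXn k : xQ ^+ k = tofrac ('X^k : {poly rat}).
Proof. by rewrite /xQ rmorphXn. Qed.

Lemma lin_indep (L : seq (int * int)) :
  \sum_(y <- L) y.1%:~R * xQ ^ y.2 = 0 ->
  forall v, \sum_(y <- L | y.2 == v) y.1 = 0.
Proof.
move=> H v.
set M : nat := \sum_(y <- L) absz y.2.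
have HM : forall y, y \in L -> 0 <= y.2 + M%:Z.
  move=> y Hy; rewrite /M (big_rem _ Hy) /= PoszD addrA.
  lia.
pose q : {poly rat} := \sum_(y <- L) y.1%:~R *: 'X^(absz (y.2 + M%:Z)).
have Hq : q = 0.
  apply/eqP; rewrite -(tofrac_eq0 q); apply/eqP.
  transitivity (xQ ^+ M * \sum_(y<-L) y.1%:~R * xQ ^ y.2); last by rewrite H mulr0.
  rewrite /q rmorph_sum mulr_sumr big_seq [RHS]big_seq; apply: eq_bigr => y Hy.
  rewrite -mul_polyC rmorphM /= -tofracXn !rmorph_int.
  rewrite mulrCA; congr (_ * _).
  rewrite -(gez0_abs (HM y Hy)) -[X in _ = X * _]/(xQ ^ M%:Z) -expfzDr ?xQ_neq0 //.
  have h := HM y Hy; rewrite -[LHS]/(xQ ^ (Posz _)); congr (_ ^ _); by rewrite /= gez0_abs // addrC.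
have := congr1 (fun r : {poly rat} => r`_(absz (v + M%:Z))) Hq.
rewrite coef0 /q coef_sum => Hc.
case: (lerP 0 (v + M%:Z)) => Hv.
  apply: (@intr_inj rat); rewrite rmorph_sum rmorph0 /= -[RHS]Hc.
  rewrite big_mkcond [RHS]big_seq /= [LHS]big_seq; apply: eq_bigr => y Hy.
  rewrite coefZ coefXn.
  have e1 : (absz (y.2 + M%:Z) == absz (v + M%:Z)) = (y.2 == v).
    apply/eqP/eqP => [h|->//]; move: (congr1 Posz h); rewrite !gez0_abs ?HM //.
    by move/addIr.
  by rewrite -e1 eq_sym; case: (_ == _); rewrite ?mulr1 ?mulr0.
rewrite big_seq_cond big1 // => y /andP[Hy /eqP Hyv].
by move: (HM y Hy); rewrite Hyv leNgt Hv.
Qed.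

Definition polyL n (L : seq (int * (nat -> nat))) : mpoly n :=
  \sum_(y <- L) y.1%:~R * mono n y.2.
Definition Wsum n g (L : seq (int * (nat -> nat))) (v : int) : int :=
  \sum_(y <- L | dotf n y.2 g == v) y.1.

Lemma has_split T (pr : pred T) (L : seq T) :
  has pr L -> exists L1 y L2, L = L1 ++ y :: L2 /\ pr y.
Proof.
elim: L => //= x L IH /orP [h|/IH [L1 [y [L2 [-> h]]]]].
  by exists [::], x, L.
by exists (x :: L1), y, L2.
Qed.

Lemma reduce n (B : mpoly n) g (P : (nat -> nat) -> Prop)
  (H : forall e e', P e -> P e' -> dotf n e g = dotf n e' g -> rdvd B (mono n e - mono n e')) :
  forall L, (forall y, List.In y L -> P y.2) -> (forall v, Wsum n g L v = 0) -> rdvd B (polyL n L).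
Proof.
move=> L; have [k] := ubnP (size L); elim: k L => // k IHk [|[c e] L'] /= Hs HP HW.
  by rewrite /polyL big_nil; apply: rdvd0.
have HPe : P e by apply: (HP (c, e)); left.
have HP' : forall y, List.In y L' -> P y.2 by move=> y Hy; apply: HP; right.
case: (boolP (has (fun y => dotf n y.2 g == dotf n e g) L')) => Hh.
  have [L1 [[c' e'] [L2 [EL /eqP He]]]] := has_split Hh.
  subst L'; simpl in He.
  have E : polyL n ((c, e) :: L1 ++ (c', e') :: L2) =
           polyL n (L1 ++ (c + c', e') :: L2) + c%:~R * (mono n e - mono n e').
    rewrite /polyL big_cons !big_cat !big_cons /= intrD; ring.
  rewrite E; apply: rdvdD; last first.
    apply: rdvdM; apply: H; [exact: HPe| |by rewrite He].
    by apply: (HP' (c', e')); apply: List.in_or_app; right; left.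
  apply: IHk.
  - by move: Hs; rewrite !size_cat /=.
  - move=> y Hy0; case: (List.in_app_or _ _ _ Hy0) => [Hy|[<-|Hy]].
    + by apply: HP'; apply: List.in_or_app; left.
    + by apply: (HP' (c', e')); apply: List.in_or_app; right; left.
    + by apply: HP'; apply: List.in_or_app; right; right.
  - move=> v; rewrite -(HW v) /Wsum big_cons !big_cat !big_cons /= He.
    by case: (dotf n e g == v); rewrite ?intrD ?addrA //; ring.
have Hc : c = 0.
  have := HW (dotf n e g); rewrite /Wsum big_cons eqxx big_hasC ?addr0 //.
rewrite /polyL big_cons Hc mul0r add0r; apply: IHk => // v.
rewrite -(HW v) /Wsum big_cons Hc; by case: ifP; rewrite ?add0r.
Qed.

Definition lpf (lf : nat -> int) : nat -> nat := fun i => if 0 <= lf i then absz (lf i) else 0%N.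
Definition lnf (lf : nat -> int) : nat -> nat := fun i => if lf i < 0 then absz (lf i) else 0%N.
Definition binf n lf : mpoly n := mono n (lpf lf) - mono n (lnf lf).

Lemma step n (lf : nat -> int) (e e' : nat -> nat) :
  (forall i, (i < n)%N -> (e' i)%:Z = (e i)%:Z + lf i) -> rdvd (binf n lf) (mono n e' - mono n e).
Proof.
move=> H; exists (mono n (fun i => minn (e i) (e' i))).
rewrite /binf mulrBr -!monoD.
congr (_ - _); apply: mono_ext => i Hi; have := H i Hi; rewrite /lpf /lnf;
  case: (lerP 0 (lf i)) => h1; lia.
Qed.

Lemma chain n (lf : nat -> int) (e e' : nat -> nat) (k : nat) :
  (forall i, (i < n)%N -> (e' i)%:Z = (e i)%:Z + k%:Z * lf i) -> rdvd (binf n lf) (mono n e' - mono n e).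
Proof.
elim: k e' => [|k IH] e' H.
  rewrite (@mono_ext n e' e) ?subrr; first exact: rdvd0.
  by move=> i Hi; have := H i Hi; rewrite mul0r addr0 => /eqP; rewrite eqz_nat => /eqP.
pose e'' := fun i => absz ((e i)%:Z + k%:Z * lf i).
have He'' : forall i, (i < n)%N -> (e'' i)%:Z = (e i)%:Z + k%:Z * lf i.
  move=> i Hi; have := H i Hi; rewrite /e'' => h.
  rewrite gez0_abs //.
  case: (lerP 0 (lf i)) => hl; nia.
have -> : mono n e' - mono n e = (mono n e' - mono n e'') + (mono n e'' - mono n e) by ring.
apply: rdvdD; last exact: IH.
apply: step => i Hi; rewrite He'' // (H i Hi); lia.
Qed.

Lemma chainz n (lf : nat -> int) (e e' : nat -> nat) (k : int) :
  (forall i, (i < n)%N -> (e' i)%:Z = (e i)%:Z + k * lf i) -> rdvd (binf n lf) (mono n e' - mono n e).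
Proof.
case: k => k H; first exact: (chain (k := k)).
rewrite -opprB; apply: rdvdN; apply: (chain (k := k.+1)) => i Hi.
rewrite (H i Hi) NegzE; lia.
Qed.

Lemma ratmult n (lam d : 'rV[int]_n) (q : rat) : coprime_coefs lam ->
  (forall j, (d 0 j)%:~R = q * (lam 0 j)%:~R :> rat) ->
  exists k : int, forall j, d 0 j = k * lam 0 j.
Proof.
move=> Hc H.
have Hb : forall j, (denq q * d 0 j = numq q * lam 0 j)%R.
  move=> j; apply: (@intr_inj rat); rewrite !rmorphM /= H.
  have hb : ((denq q)%:~R : rat) != 0 by rewrite intr_eq0 denq_neq0.
  rewrite -[X in _ * (X * _) = _](divq_num_den q); field; exact: hb.
have Hd : forall j, dvdn (absz (denq q)) (absz (lam 0 j)).
  move=> j; rewrite -(@Gauss_dvdr _ (absz (numq q))); last by rewrite coprime_sym coprime_num_den.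
  by rewrite -abszM -Hb abszM dvdn_mulr.
have H1 : absz (denq q) = 1%N.
  apply/eqP; rewrite -dvdn1 -Hc.
  by apply: (big_ind (fun x => dvdn (absz (denq q)) x)) => [|x y hx hy|i _]; [exact: dvdn0|rewrite dvdn_gcd hx hy|exact: Hd].
have Hb1 : denq q = 1.
  have := denq_gt0 q; move: H1; case: (denq q) => // m; by case: m => // [[|m]].
by exists (numq q) => j; have := Hb j; rewrite Hb1 mul1r.
Qed.

Lemma In_nth T (d : T) (x : T) (s : seq T) : List.In x s -> exists i, (i < size s)%N /\ nth d s i = x.
Proof.
elim: s => //= y s IH [->|/IH [i [Hi Ei]]]; first by exists 0%N.
by exists i.+1.
Qed.

Definition ev n (e : nat -> nat) : 'rV[rat]_n := \row_j ((e j)%:R).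

Lemma dot_ev n (gamma : 'rV[int]_n) e :
  (toQ gamma *m (ev n e)^T) 0 0 = (dotf n e (rvfun gamma))%:~R.
Proof.
rewrite !mxE /dotf rmorph_sum; apply: eq_bigr => j _.
rewrite !mxE rvfunE rmorphM /= mulrC; by congr (_ * _).
Qed.

Lemma generic n (lam : 'rV[int]_n) (N : 'rV[int]_n -> Prop) (Es : seq (nat -> nat)) :
  lam != 0 -> coprime_coefs lam -> (forall g, N g -> Nlam lam g) -> has_rank (imQ N) n.-1 ->
  exists gamma, N gamma /\ forall e e', List.In e Es -> List.In e' Es ->
     dotf n e (rvfun gamma) = dotf n e' (rvfun gamma) ->
     rdvd (binf n (rvfun lam)) (mono n e - mono n e').
Proof.
move=> Hl Hc HN [k [S [HS [HrS [HsubS Hcov]]]]].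
have n0 : (0 < n)%N.
  case: (posnP n) => [n0'|//]; exfalso; move/eqP: Hl; apply; apply/rowP => i.
  by have := ltn_ord i; rewrite {2}n0'.
set lamQ := toQ lam.
have Hlq : lamQ != 0.
  apply: contra Hl => /eqP h; apply/eqP/rowP => j.
  have := congr1 (fun M : 'rV[rat]_n => M 0 j) h; rewrite !mxE => /eqP; rewrite intr_eq0 => /eqP.
  done.
have HSl : lamQ *m S^T = 0.
  apply/rowP => i; rewrite !mxE.
  have [g [Ng Eg]] := HS i.
  have := HN g Ng; rewrite /Nlam /dotz => h0.
  transitivity ((dotz lam g)%:~R : rat); last by rewrite /dotz h0.
  rewrite /dotz rmorph_sum; apply: eq_bigr => j _; rewrite !mxE.
  have := congr1 (fun M : 'rV[rat]_n => M 0 j) Eg; rewrite !mxE => ->.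
  by rewrite rmorphM.
have HK : (kermx S^T <= lamQ)%MS.
  have h1 : (lamQ <= kermx S^T)%MS by rewrite sub_kermx HSl.
  have := mxrank_leqif_sup h1; case=> _ <-.
  rewrite rank_rV Hlq mxrank_ker mxrank_tr HrS /=.
  apply/eqP; lia.
have Hrank : forall d : 'rV[rat]_n, ~~ (d <= lamQ)%MS ->
    (\rank (S :&: kermx d^T))%:Z = (n.-1)%:Z - 1.
  move=> d Hd.
  have dn0 : d != 0 by apply: contraNneq Hd => ->; exact: sub0mx.
  have HSK : ~~ (S <= kermx d^T)%MS.
    apply: contra Hd; rewrite sub_kermx => /eqP h.
    apply: submx_trans HK; rewrite sub_kermx -(trmxK d) -trmx_mul h trmx0.
    done.
  have Hkd : \rank (kermx d^T) = n.-1 by rewrite mxrank_ker mxrank_tr rank_rV dn0 subn1.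
  have Hsum : \rank (S + kermx d^T)%MS = n.
    apply/eqP; rewrite eqn_leq rank_leq_col /=.
    have := mxrank_leqif_sup (addsmxSr S (kermx d^T)).
    case=> hle heq.
    have : \rank (kermx d^T) != \rank (S + kermx d^T)%MS by rewrite heq addsmx_sub negb_and HSK.
    rewrite Hkd => hne; move: hle; rewrite Hkd; lia.
  have := mxrank_sum_cap S (kermx d^T); rewrite Hsum HrS Hkd; lia.
pose d0 := fun _ : nat => 0%N.
pose Is := iota 0 (size Es).
pose dd := fun i j => ev n (nth d0 Es i) - ev n (nth d0 Es j).
pose Ps := [seq p <- [seq (i, j) | i <- Is, j <- Is] | ~~ (dd p.1 p.2 <= lamQ)%MS].
pose Us := [seq (S :&: kermx (dd p.1 p.2)^T)%MS | p <- Ps].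
have [v [Mv Hv]] : exists v, imQ N v /\ forall U, U \in Us -> ~~ (v <= U)%MS.
  apply: Hcov => U /mapP [p Hp ->]; split; first exact: capmxSl.
  by apply: Hrank; move: Hp; rewrite mem_filter => /andP [h _].
have vS := HsubS v Mv.
case: Mv => gamma [Ng Ev].
exists gamma; split => // e e' He He' Hdot.
have [i [Hi Ei]] := In_nth d0 He.
have [j [Hj Ej]] := In_nth d0 He'.
case: (boolP (dd i j <= lamQ)%MS) => Hij.
  case/submxP: Hij => D HD.
  have Hq : forall l, (((\row_l ((e l)%:Z - (e' l)%:Z)) : 'rV[int]_n) 0 l)%:~R = D 0 0 * (lam 0 l)%:~R :> rat.
    move=> l; have := congr1 (fun M : 'rV[rat]_n => M 0 l) HD.
    rewrite /dd Ei Ej !mxE big_ord1 => h.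
    by rewrite rmorphB /= -!pmulrn h /lamQ mxE.
  have [kk Hk] := ratmult Hc Hq.
  apply: (@chainz n (rvfun lam) e' e kk) => l Hl0.
  have := Hk (Ordinal Hl0); rewrite mxE (rvfunE lam (Ordinal Hl0)) /=.
  lia.
exfalso.
have HU : (S :&: kermx (dd i j)^T)%MS \in Us.
  apply/mapP; exists (i, j) => //; rewrite mem_filter Hij /=.
  by apply: allpairs_f; rewrite mem_iota.
have := Hv _ HU; rewrite sub_capmx vS /= sub_kermx.
apply/negP/negPn/eqP/rowP => a; rewrite ord1 Ev.
rewrite /dd linearB /= mulmxBr.
rewrite [LHS]mxE [X in _ + X]mxE !dot_ev Ei Ej Hdot subrr mxE.
by [].
Qed.

Lemma key n (B : mpoly n) (gamma : nat -> int) (p : mpoly n) (P : (nat -> nat) -> Prop) :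
  (forall e e', P e -> P e' -> dotf n e gamma = dotf n e' gamma -> rdvd B (mono n e - mono n e')) ->
  (forall y, List.In y (expand n p) -> P y.2) -> meval gamma p = 0 -> rdvd B p.
Proof.
move=> H HP Hp.
rewrite (expandE p) -/(polyL n (expand n p)).
apply: (reduce H HP) => v.
rewrite meval_expand in Hp.
have Hl : \sum_(y <- [seq (y.1, dotf n y.2 gamma) | y <- expand n p]) y.1%:~R * xQ ^ y.2 = 0.
  by rewrite big_map.
by have := lin_indep Hl v; rewrite big_map.
Qed.

Lemma binomE n (lam : 'rV[int]_n) : binom lam = binf n (rvfun lam).
Proof.
rewrite /binom /binf !mmonoE; congr (_ - _); apply: mono_ext => i Hi;
  rewrite (rvnatE _ (Ordinal Hi)) mxE /lpf /lnf -(rvfunE lam (Ordinal Hi)) //.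
Qed.

Lemma peval_binom n (lam g : 'rV[int]_n) :
  exists A Bv, peval g (binom lam) = xQ ^ A - xQ ^ Bv /\ A - Bv = dotz lam g.
Proof.
exists (dotf n (lpf (rvfun lam)) (rvfun g)), (dotf n (lnf (rvfun lam)) (rvfun g)); split.
  by rewrite binomE /peval /binf mevalB !meval_mono.
rewrite /dotf /dotz -sumrB; apply: eq_bigr => i _.
rewrite -mulrBl /lpf /lnf !rvfunE; congr (_ * _).
case: (lerP 0 (lam 0 i)) => h; lia.
Qed.

Lemma dotz_self n (lam : 'rV[int]_n) : lam != 0 -> dotz lam lam != 0.
Proof.
move=> Hl.
have [i Hi] : exists i, lam 0 i != 0.
  apply/existsP; apply: contraR Hl; rewrite negb_exists => /forallP h.
  apply/eqP/rowP => j; rewrite mxE; exact/eqP/negPn/h.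
rewrite /dotz (bigD1 i) //= gt_eqF //.
apply: ltr_wpDr; first by apply: sumr_ge0 => j _; rewrite -expr2 sqr_ge0.
by rewrite -expr2 lt_def sqrf_eq0 Hi sqr_ge0.
Qed.

Unset Implicit Arguments.

Theorem lemma3p8 (n : nat) (lam : 'rV[int]_n) (N : 'rV[int]_n -> Prop) :
  lam != 0 -> coprime_coefs lam ->
  (forall g, N g -> Nlam lam g) ->
  has_rank (imQ N) n.-1 ->
  (forall p : mpoly n, (forall g, N g -> peval g p = 0) <-> rdvd (binom lam) p) /\
  rirreducible (binom lam).
Proof.
move=> Hl Hc HN Hrk.
have Hev : forall g, N g -> peval g (binom lam) = 0.
  move=> g Ng; have [A [Bv [-> HAB]]] := peval_binom lam g.
  move: HAB; rewrite (HN g Ng) => /eqP; rewrite subr_eq0 => /eqP ->.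
  by rewrite subrr.
have Hgen := fun Es => @generic n lam N Es Hl Hc HN Hrk.
have Hkey : forall (Es : seq (nat -> nat)) (p : mpoly n) g,
    (forall e e', List.In e Es -> List.In e' Es ->
       dotf n e (rvfun g) = dotf n e' (rvfun g) ->
       rdvd (binf n (rvfun lam)) (mono n e - mono n e')) ->
    (forall y, List.In y (expand n p) -> List.In y.2 Es) ->
    peval g p = 0 -> rdvd (binom lam) p.
  move=> Es p g H1 H2 H3; rewrite binomE.
  exact: (@key n _ (rvfun g) p (fun e => List.In e Es) H1 H2 H3).
have Hb0 : binom lam != 0.
  apply/eqP => h0.
  have [A [Bv [HP HAB]]] := peval_binom lam lam.
  have hne : A != Bv by rewrite -subr_eq0 HAB dotz_self.
  have Hs : \sum_(y <- [:: (1, A); (-1, Bv)]) y.1%:~R * xQ ^ y.2 = 0.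
    transitivity (xQ ^ A - xQ ^ Bv).
      rewrite !big_cons big_nil /= addr0 mul1r; congr (_ + _).
      by rewrite mulrNz mulr1z mulN1r.
    by rewrite -HP h0 -(subrr (0 : mpoly n)) /peval mevalB subrr.
  have := lin_indep Hs A; rewrite !big_cons big_nil eqxx /= eq_sym (negbTE hne) addr0.
  by move/eqP; rewrite oner_eq0.
split.
  move=> p; split.
    move=> Hp.
    have [g [Ng Hg]] := Hgen [seq y.2 | y <- expand n p].
    apply: (Hkey _ p g Hg) => //; last exact: Hp.
    by move=> y Hy; apply: List.in_map.
  by case=> c -> g Ng; rewrite /peval mevalM; have := Hev g Ng; rewrite /peval => ->; rewrite mulr0.
split => //; split.
  apply/negP => Hu.
  case: Hrk => k [S [_ [_ [_ Hcov]]]].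
  have [v [[g [Ng _]] _]] := Hcov [::] (fun U HU => False_ind _ (notF (etrans (esym (in_nil U)) HU))).
  have : peval g ((binom lam)^-1 * binom lam) = 0 by rewrite /peval mevalM; have := Hev g Ng; rewrite /peval => ->; rewrite mulr0.
  by rewrite mulVr // /peval meval1; apply/eqP; exact: oner_neq0.
move=> a b Hab.
pose Es := [seq y.2 | y <- expand n a] ++ [seq y.2 | y <- expand n b].
have [g [Ng Hg]] := Hgen Es.
have := Hev g Ng; rewrite Hab /peval mevalM => /eqP; rewrite mulf_eq0 => /orP [ha|hb].
  right.
  have [c Hc'] : rdvd (binom lam) a.
    apply: (Hkey Es a g Hg); last exact/eqP.
    by move=> y Hy; apply: List.in_or_app; left; apply: List.in_map.
  have hcb : c * b = 1.
    apply: (mulIf Hb0); rewrite mul1r {2}Hab Hc'; ring.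
  by apply/unitrP; exists c; split; [exact: hcb|rewrite mulrC].   
left.
have [c Hc'] : rdvd (binom lam) b.
  apply: (Hkey Es b g Hg); last exact/eqP.
  by move=> y Hy; apply: List.in_or_app; right; apply: List.in_map.
have hca : c * a = 1.
  apply: (mulIf Hb0); rewrite mul1r {2}Hab Hc'; ring.
by apply/unitrP; exists c; split; [exact: hca|rewrite mulrC].
Qed.
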